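(* Let $L_1$ and $L_2$ be non-nilpotent finite-dimensional Lie algebras over a field $F$. Then $\Gamma_{\mathfrak{N}}(L_1\oplus L_2)$ is connected.
   Context: $\langle a,b\rangle$ denotes the Lie subalgebra generated by $a,b$, and $\mathrm{nil}(L)=\{x\in L\mid \langle h,x\rangle \text{ is nilpotent for all } h\in L\}$. For a finite-dimensional non-nilpotent Lie algebra $L$, the nilpotent graph $\Gamma_{\mathfrak{N}}(L)$ is the simple undirected graph with vertex set $L\setminus\mathrm{nil}(L)$ in which distinct vertices $x,y$ are adjacent iff $\langle x,y\rangle$ is nilpotent. $L_1\oplus L_2$ is the direct sum of Lie algebras with componentwise bracket. *)

(* Defs.v *)
From HB Require Import structures.
From mathcomp Require Import all_boot all_order all_algebra.
From Stdlib Require Import Relations.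
Set Implicit Arguments. Unset Strict Implicit. Unset Printing Implicit Defensive.
Import GRing.Theory.
Local Open Scope ring_scope.

Section Lie.
Variables (F : fieldType) (V : vectType F).

Definition is_lie_bracket (b : V -> V -> V) : Prop :=
  [/\ (forall (a : F) x y z, b (a *: x + y) z = a *: b x z + b y z),
      (forall (a : F) x y z, b z (a *: x + y) = a *: b z x + b z y),
      (forall x, b x x = 0) &
      (forall x y z, b x (b y z) + b y (b z x) + b z (b x y) = 0)].

(* [U, W] : the subspace spanned by all brackets [u, w], u in U, w in W
   (spanned by brackets of basis vectors, by bilinearity). *)
Definition bracket_sp (b : V -> V -> V) (U W : {vspace V}) : {vspace V} :=
  <<[seq b x y | x <- (vbasis U : seq V), y <- (vbasis W : seq V)]>>%VS.

(* lower central series of a subalgebra S : S^1 = S, S^(k+1) = [S, S^k] *)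
Fixpoint lcs (b : V -> V -> V) (S : {vspace V}) (n : nat) : {vspace V} :=
  match n with
  | 0 => S
  | n'.+1 => bracket_sp b S (lcs b S n')
  end.

Definition lie_nilpotent (b : V -> V -> V) (S : {vspace V}) : Prop :=
  exists n, lcs b S n = 0%VS.

Definition lie_closed (b : V -> V -> V) (U : {vspace V}) : Prop :=
  forall x y, x \in U -> y \in U -> b x y \in U.

Definition is_gen_subalg (b : V -> V -> V) (x y : V) (S : {vspace V}) : Prop :=
  [/\ x \in S, y \in S, lie_closed b S &
      forall U : {vspace V}, lie_closed b U -> x \in U -> y \in U -> (S <= U)%VS].

Definition gen_nilpotent (b : V -> V -> V) (x y : V) : Prop :=
  exists S, is_gen_subalg b x y S /\ lie_nilpotent b S.

Definition in_nil (b : V -> V -> V) (x : V) : Prop :=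
  forall h, gen_nilpotent b h x.

Definition nil_adj (b : V -> V -> V) (x y : V) : Prop :=
  [/\ ~ in_nil b x, ~ in_nil b y, x <> y & gen_nilpotent b x y].

Definition nilgraph_connected (b : V -> V -> V) : Prop :=
  forall x y, ~ in_nil b x -> ~ in_nil b y -> clos_refl_trans V (nil_adj b) x y.

End Lie.

Definition sum_bracket (F : fieldType) (V1 V2 : vectType F)
  (b1 : V1 -> V1 -> V1) (b2 : V2 -> V2 -> V2) (p q : V1 * V2) : V1 * V2 :=
  (b1 p.1 q.1, b2 p.2 q.2).

(* Main.v *)
From Pilot Require Import Defs.
From HB Require Import structures.
From mathcomp Require Import all_boot all_order all_algebra.
From Stdlib Require Import Classical Relations.
From mathcomp Require Import zify.
Set Implicit Arguments. Unset Strict Implicit. Unset Printing Implicit Defensive.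
Import GRing.Theory.
Local Open Scope ring_scope.
Notation innil := Pilot.Defs.in_nil.

Section Gen.
Variables (F : fieldType) (V : vectType F) (b : V -> V -> V).
Hypothesis Hb : is_lie_bracket b.

Lemma bl0 z : b 0 z = 0.
Proof.
case: Hb => H1 _ _ _; have := H1 1 0 0 z; rewrite scale1r !addr0.
rewrite scale1r => E; apply: (@addrI _ (b 0 z)); by rewrite addr0 -E.
Qed.
Lemma br0 z : b z 0 = 0.
Proof.
case: Hb => _ H1 _ _; have := H1 1 0 0 z; rewrite scale1r !addr0.
rewrite scale1r => E; apply: (@addrI _ (b z 0)); by rewrite addr0 -E.
Qed.
Lemma blD x y z : b (x + y) z = b x z + b y z.
Proof. case: Hb => H1 _ _ _. have := H1 1 x y z. by rewrite !scale1r. Qed.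
Lemma brD x y z : b z (x + y) = b z x + b z y.
Proof. case: Hb => _ H1 _ _. have := H1 1 x y z. by rewrite !scale1r. Qed.
Lemma blZ a x z : b (a *: x) z = a *: b x z.
Proof. by case: Hb => H1 _ _ _; rewrite -[a *: x]addr0 H1 bl0 addr0. Qed.
Lemma brZ a x z : b z (a *: x) = a *: b z x.
Proof. by case: Hb => _ H1 _ _; rewrite -[a *: x]addr0 H1 br0 addr0. Qed.
Lemma bxx x : b x x = 0.
Proof. by case: Hb. Qed.
Lemma banti x y : b x y = - b y x.
Proof.
have := bxx (x + y); rewrite blD !brD !bxx add0r addr0.
by move/eqP; rewrite addr_eq0 => /eqP.
Qed.
Lemma bl_sum I r (P : pred I) (f : I -> V) z :
  b (\sum_(i <- r | P i) f i) z = \sum_(i <- r | P i) b (f i) z.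
Proof. exact: (big_morph (fun x => b x z) (fun x y => blD x y z) (bl0 z)). Qed.
Lemma br_sum I r (P : pred I) (f : I -> V) z :
  b z (\sum_(i <- r | P i) f i) = \sum_(i <- r | P i) b z (f i).
Proof. exact: (big_morph (fun x => b z x) (fun x y => brD x y z) (br0 z)). Qed.

Lemma vbasis_expand (U : {vspace V}) x : x \in U ->
  x = \sum_i coord (vbasis U) i x *: (vbasis U)`_i.
Proof. by move=> xU; apply: coord_span; rewrite (span_basis (vbasisP U)). Qed.

Lemma bracket_gen (U W P : {vspace V}) :
  (forall x y, x \in (vbasis U : seq V) -> y \in (vbasis W : seq V) -> b x y \in P) ->
  forall x y, x \in U -> y \in W -> b x y \in P.
Proof.
move=> H x y xU yW; rewrite (vbasis_expand xU) (vbasis_expand yW) bl_sum.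
apply: memv_suml => i _; rewrite blZ br_sum; apply: memvZ.
apply: memv_suml => j _; rewrite brZ; apply: memvZ; apply: H; apply: mem_nth;
  by rewrite size_tuple.
Qed.

Lemma bracket_mem (U W : {vspace V}) x y :
  x \in U -> y \in W -> b x y \in bracket_sp b U W.
Proof.
apply: bracket_gen => x' y' hx hy; apply: memv_span.
by apply: (allpairs_f b hx hy).
Qed.

Lemma bracket_sub (U W P : {vspace V}) :
  (forall x y, x \in U -> y \in W -> b x y \in P) -> (bracket_sp b U W <= P)%VS.
Proof.
move=> H; apply/span_subvP => w /allpairsP [[x y] [/= hx hy ->]].
by apply: H; [apply: vbasis_mem hx | apply: vbasis_mem hy].
Qed.

Lemma ltn_dim (U W : {vspace V}) : (U <= W)%VS -> ~~ (W <= U)%VS -> (\dim U < \dim W)%N.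
Proof.
move=> sUW nWU; rewrite ltnNge; apply/negP => H.
have : U == W by rewrite eqEdim sUW H.
by move/eqP => E; rewrite E subvv in nWU.
Qed.

Definition stable (M X : {vspace V}) := forall m x, m \in M -> x \in X -> b m x \in X.

Lemma nilp_adnil (S : {vspace V}) : lie_nilpotent b S ->
  forall z u, z \in S -> u \in S -> exists n, iter n (b z) u = 0.
Proof.
move=> [n Hn] z u zS uS; exists n.
have : forall k, iter k (b z) u \in lcs b S k.
  by elim=> [|k IH] //=; apply: bracket_mem.
by move/(_ n); rewrite Hn memv0 => /eqP.
Qed.

Lemma gen_adnil x y : gen_nilpotent b x y -> exists n, iter n (b x) y = 0.
Proof. by move=> [S [[hx hy _ _] HS]]; apply: (nilp_adnil HS). Qed.

Lemma gen_exists h x : exists S, is_gen_subalg b h x S.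
Proof.
suff H : forall d (U : {vspace V}), (\dim U <= d)%N -> lie_closed b U -> h \in U -> x \in U ->
  exists S, is_gen_subalg b h x S.
  apply: (H _ fullv (leqnn _)) => //; [by move=> *; apply: memvf | apply: memvf | apply: memvf].
elim=> [|d IH] U hd hU hh hx.
  exists U; split => // U' _ _ _.
  by move: hd; rewrite leqn0 dimv_eq0 => /eqP ->; apply: sub0v.
case: (classic (exists U' : {vspace V}, [/\ lie_closed b U', h \in U', x \in U' & ~~ (U <= U')%VS])).
  move=> [U' [c' h' x' n']].
  apply: (IH (U :&: U')%VS).
  - rewrite -ltnS; apply: leq_trans hd; apply: ltn_dim; first exact: capvSl.
    apply/negP => sU; move: n'; rewrite (subv_trans sU (capvSr _ _)) //.
  - move=> a c /memv_capP [aU aU'] /memv_capP [cU cU']; apply/memv_capP; split.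
    + exact: hU. + exact: c'.
  - by apply/memv_capP.
  - by apply/memv_capP.
move=> Hn; exists U; split => // U' c' h' x'; apply/negPn/negP => n'.
by apply: Hn; exists U'.
Qed.

Lemma closed0 : lie_closed b 0%VS.
Proof. by move=> x y; rewrite !memv0 => /eqP -> /eqP ->; rewrite bl0. Qed.

Lemma iter_last (f : V -> V) (W : {vspace V}) u0 k :
  u0 \notin W -> iter k f u0 \in W ->
  exists j, iter j f u0 \notin W /\ f (iter j f u0) \in W.
Proof.
move=> nu0; elim: k => [|k IH] /=; first by rewrite (negbTE nu0).
case: (boolP (iter k f u0 \in W)) => [/IH //|nk hk]; by exists k.
Qed.

Lemma max_sub (M : {vspace V}) : lie_closed b M -> ~~ (M <= 0)%VS ->
  exists N : {vspace V}, [/\ lie_closed b N, (N <= M)%VS, ~~ (M <= N)%VS &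
    forall N' : {vspace V}, lie_closed b N' -> (N <= N')%VS -> (N' <= M)%VS ->
      ~~ (M <= N')%VS -> (N' <= N)%VS].
Proof.
move=> hM nM.
suff H : forall d (N : {vspace V}), (\dim M - \dim N <= d)%N -> lie_closed b N ->
  (N <= M)%VS -> ~~ (M <= N)%VS ->
  exists N : {vspace V}, [/\ lie_closed b N, (N <= M)%VS, ~~ (M <= N)%VS &
    forall N' : {vspace V}, lie_closed b N' -> (N <= N')%VS -> (N' <= M)%VS ->
      ~~ (M <= N')%VS -> (N' <= N)%VS].
  by apply: (H _ 0%VS (leqnn _) closed0 (sub0v _) nM).
elim=> [|d IH] N hd hN sNM nMN;
 (case: (classic (exists N' : {vspace V}, [/\ lie_closed b N', (N <= N')%VS, (N' <= M)%VS,
      ~~ (M <= N')%VS & ~~ (N' <= N)%VS])); last first).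
- move=> Hn; exists N; split => // N' c1 c2 c3 c4; apply/negPn/negP => c5.
  by apply: Hn; exists N'.
- move=> [N' [_ _ _ _ _]]; have := ltn_dim sNM nMN; move: hd; lia.
- move=> Hn; exists N; split => // N' c1 c2 c3 c4; apply/negPn/negP => c5.
  by apply: Hn; exists N'.
- move=> [N' [c1 c2 c3 c4 c5]]; apply: (IH N') => //.
  have := ltn_dim c2 c5; have := dimvS c3; move: hd; lia.
Qed.

Lemma abel_gen p q u v : b u v = 0 ->
  p \in (<[u]> + <[v]>)%VS -> q \in (<[u]> + <[v]>)%VS ->
  (forall U : {vspace V}, lie_closed b U -> p \in U -> q \in U -> u \in U /\ v \in U) ->
  gen_nilpotent b p q.
Proof.
move=> huv hp hq hU; set S := (<[u]> + <[v]>)%VS.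
have hvu : b v u = 0 by rewrite banti huv oppr0.
have ab : forall x y, x \in S -> y \in S -> b x y = 0.
  move=> x y /memv_addP [w /vlineP [a ->] [w' /vlineP [c ->] ->]]
             /memv_addP [w2 /vlineP [a2 ->] [w2' /vlineP [c2 ->] ->]].
  by rewrite !blD !brD !blZ !brZ !bxx huv hvu !scaler0 !addr0.
exists S; split; last first.
  exists 1%N => /=; apply/eqP; rewrite -subv0; apply: bracket_sub => x y hx hy.
  by rewrite ab // mem0v.
split => //; first by move=> x y hx hy; rewrite ab // mem0v.
move=> U cU pU qU; have [uU vU] := hU U cU pU qU.
by rewrite subv_add -!memvE uU vU.
Qed.

Lemma gen_sym p q : gen_nilpotent b p q -> gen_nilpotent b q p.
Proof.
move=> [S [[hp hq c m] n]]; exists S; split => //; split => // U cU qU pU.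
exact: m.
Qed.

Lemma adj_abel p q u v : ~ innil b p -> ~ innil b q -> b u v = 0 ->
  p \in (<[u]> + <[v]>)%VS -> q \in (<[u]> + <[v]>)%VS ->
  (forall U : {vspace V}, lie_closed b U -> p \in U -> q \in U -> u \in U /\ v \in U) ->
  clos_refl_trans V (nil_adj b) p q /\ clos_refl_trans V (nil_adj b) q p.
Proof.
move=> np nq huv hp hq hU.
have g := abel_gen huv hp hq hU.
case: (classic (p = q)) => [<-|npq]; first by split; apply: rt_refl.
split; apply: rt_step; split => //; last exact: gen_sym.
by move=> E; apply: npq.
Qed.

Section Engel.
Variable K : {vspace V}.
Hypothesis hK : lie_closed b K.
Hypothesis hnil : forall z u, z \in K -> u \in K -> exists n, iter n (b z) u = 0.

Lemma engel_core n : forall M W U : {vspace V}, (\dim M <= n)%N -> lie_closed b M ->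
  (M <= K)%VS -> (W <= U)%VS -> ~~ (U <= W)%VS -> (U <= K)%VS ->
  stable M W -> stable M U ->
  exists v, [/\ v \in U, v \notin W & forall m, m \in M -> b m v \in W].
Proof.
have zero_case : forall M W U : {vspace V}, (M <= 0)%VS -> ~~ (U <= W)%VS ->
  exists v, [/\ v \in U, v \notin W & forall m, m \in M -> b m v \in W].
  move=> M W U M0 /subvPn [v vU vW]; exists v; split => // m mM.
  by move: (subvP M0 m mM); rewrite memv0 => /eqP ->; rewrite bl0 mem0v.
elim: n => [|n IH] M W U hd hM sMK sWU nUW sUK sW sU.
  apply: zero_case nUW; by move: hd; rewrite leqn0 dimv_eq0 => /eqP ->.
case: (boolP (M <= 0)%VS) => [M0|nM0]; first exact: zero_case nUW.
have [N [hN sNM nMN maxN]] := max_sub hM nM0.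
have dN : (\dim N <= n)%N by rewrite -ltnS; apply: leq_trans hd; apply: ltn_dim.
have sNK := subv_trans sNM sMK.
have [z [zM zN hz]] : exists z, [/\ z \in M, z \notin N & forall m, m \in N -> b m z \in N].
  apply: (IH N N M dN hN sNK sNM nMN sMK).
  - by move=> m x mN xN; exact: hN.
  - by move=> m x mN xM; apply: hM => //; exact: (subvP sNM).
have zK : z \in K := subvP sMK z zM.
have decomp : forall m, m \in M -> exists2 n1, n1 \in N & exists a, m = n1 + a *: z.
  move=> m mM.
  have sMN' : (M <= N + <[z]>)%VS.
    apply/negPn/negP => nMN'; have := maxN (N + <[z]>)%VS.
    have cl : lie_closed b (N + <[z]>)%VS.
      move=> x y /memv_addP [n1 n1N [w /vlineP [a ->] ->]]
                 /memv_addP [n2 n2N [w' /vlineP [c ->] ->]].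
      apply: (subvP (addvSl _ _)).
      rewrite blD !brD !blZ !brZ bxx !scaler0 addr0.
      apply: memvD; first apply: memvD.
      - exact: hN.
      - by apply: memvZ; apply: hz.
      - by apply: memvZ; rewrite banti; rewrite memvN; apply: hz.
    move=> /(_ cl (addvSl _ _)).
    rewrite subv_add sNM -memvE zM => /(_ isT nMN'); apply/negP.
    apply/subvPn; exists z => //; apply: (subvP (addvSr _ _)); exact: memv_line.
  by move: (subvP sMN' m mM) => /memv_addP [n1 n1N [w /vlineP [a ->] ->]]; exists n1 => //; exists a.
have sNU : stable N U by move=> m x mN xU; apply: sU => //; exact: (subvP sNM).
have sNW : stable N W by move=> m x mN xU; apply: sW => //; exact: (subvP sNM).
have [u0 [u0U u0W hu0]] := IH N W U dN hN sNK sWU nUW sUK sNW sNU.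
pose P u := u \in U /\ forall m, m \in N -> b m u \in W.
have Pstep : forall u, P u -> P (b z u).
  move=> u [uU hu]; split; first exact: sU.
  move=> m mN; case: Hb => _ _ _ J; have := J m z u.
  move/eqP; rewrite -addrA addr_eq0 => /eqP ->.
  rewrite memvN; apply: memvD.
  - apply: sW => //; rewrite banti; rewrite memvN; exact: hu.
  - rewrite banti; rewrite memvN; apply: hu; exact: hz.
have Piter : forall j, P (iter j (b z) u0).
  by elim=> [|j IHj] /=; [split | apply: Pstep].
have [k hk] := hnil zK (subvP sUK u0 u0U).
have hk' : iter k (b z) u0 \in W by rewrite hk mem0v.
have [j [nj hj]] := @iter_last (b z) W u0 k u0W hk'.
have [vU hv] := Piter j.
exists (iter j (b z) u0); split => // m /decomp [n1 n1N [a ->]].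
by rewrite blD blZ; apply: memvD; [apply: hv | apply: memvZ].
Qed.

Lemma engel : lie_nilpotent b K.
Proof.
suff H : forall d (W : {vspace V}), (W <= K)%VS -> stable K W ->
    (\dim K - \dim W <= d)%N -> exists n, (lcs b K n <= W)%VS.
  have st0 : stable K 0%VS by move=> m x _; rewrite memv0 => /eqP ->; rewrite br0 mem0v.
  have [n Hn] := H _ 0%VS (sub0v _) st0 (leqnn _).
  by exists n; apply/eqP; rewrite -subv0.
elim=> [|d IH] W sWK sW hd; case: (boolP (K <= W)%VS) => [sKW|nKW];
  try by exists 0%N.
  by have := ltn_dim sWK nKW; move: hd; lia.
have [v [vK vW hv]] := @engel_core (\dim K) K W K (leqnn _) hK (subvv _) sWK nKW (subvv _) sW
   (fun m x mK xK => hK mK xK).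
pose W' := (W + <[v]>)%VS.
have decomp : forall y, y \in W' -> exists2 w, w \in W & exists a, y = w + a *: v.
  by move=> y /memv_addP [w wW [w' /vlineP [a ->] ->]]; exists w => //; exists a.
have sWW' : (W <= W')%VS := addvSl _ _.
have vW' : v \in W' by apply: (subvP (addvSr _ _)); exact: memv_line.
have sW'K : (W' <= K)%VS by rewrite subv_add sWK -memvE.
have stW' : stable K W'.
  move=> m y mK /decomp [w wW [a ->]]; apply: (subvP sWW').
  by rewrite brD brZ; apply: memvD; [apply: sW | apply: memvZ; apply: hv].
have nW'W : ~~ (W' <= W)%VS by apply/subvPn; exists v.
have hd' : (\dim K - \dim W' <= d)%N.
  by have := ltn_dim sWW' nW'W; have := dimvS sW'K; move: hd; lia.
have [n Hn] := IH W' sW'K stW' hd'.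
exists n.+1 => /=; apply: bracket_sub => x y xK /(subvP Hn) /decomp [w wW [a ->]].
by rewrite brD brZ; apply: memvD; [apply: sW | apply: memvZ; apply: hv].
Qed.
End Engel.
End Gen.

Lemma iter0 (T : zmodType) (f : T -> T) m : f 0 = 0 -> iter m f 0 = 0.
Proof. by move=> f0; elim: m => //= m ->. Qed.

Lemma iter_more (T : zmodType) (f : T -> T) m n u : f 0 = 0 -> iter n f u = 0 -> iter (m + n) f u = 0.
Proof. by move=> f0 h; rewrite iterD h iter0. Qed.

Section Sum.
Variables (F : fieldType) (V1 V2 : vectType F) (b1 : V1 -> V1 -> V1) (b2 : V2 -> V2 -> V2).
Hypotheses (H1 : is_lie_bracket b1) (H2 : is_lie_bracket b2).
Local Notation b := (sum_bracket b1 b2).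

Lemma sumLie : is_lie_bracket b.
Proof.
case: H1 => A1 B1 C1 D1; case: H2 => A2 B2 C2 D2; split.
- by move=> a x y z; rewrite /sum_bracket /= A1 A2.
- by move=> a x y z; rewrite /sum_bracket /= B1 B2.
- by move=> x; rewrite /sum_bracket C1 C2.
- move=> x y z; rewrite /sum_bracket /=; transitivity (b1 x.1 (b1 y.1 z.1) + b1 y.1 (b1 z.1 x.1) + b1 z.1 (b1 x.1 y.1), b2 x.2 (b2 y.2 z.2) + b2 y.2 (b2 z.2 x.2) + b2 z.2 (b2 x.2 y.2)); first by []. by rewrite D1 D2.
Qed.

Lemma iter_sum n z u : iter n (b z) u = (iter n (b1 z.1) u.1, iter n (b2 z.2) u.2).
Proof. by elim: n => [|n IH] /=; [case: u | rewrite IH]. Qed.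

Definition p1 (w : V1 * V2) : V1 * V2 := (w.1, 0).
Definition p2 (w : V1 * V2) : V1 * V2 := (0, w.2).
Fact p1_lin : linear p1.
Proof. move=> a x y; rewrite /p1; transitivity (a *: x.1 + y.1, a *: (0:V2) + 0); last by [].
by rewrite scaler0 addr0. Qed.
Fact p2_lin : linear p2.
Proof. move=> a x y; rewrite /p2; transitivity (a *: (0:V1) + 0, a *: x.2 + y.2); last by [].
by rewrite scaler0 addr0. Qed.
HB.instance Definition _ := GRing.isSemilinear.Build F (V1 * V2)%type (V1 * V2)%type _ p1
  (GRing.semilinear_linear p1_lin).
HB.instance Definition _ := GRing.isSemilinear.Build F (V1 * V2)%type (V1 * V2)%type _ p2
  (GRing.semilinear_linear p2_lin).

Lemma p12 a c : p1 a + p2 c = (a.1, c.2).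
Proof. rewrite /p1 /p2; transitivity (a.1 + 0, 0 + c.2); first by [].
by rewrite addr0 add0r. Qed.

Lemma in_nil_sum (x1 : V1) (x2 : V2) : innil b (x1, 0) -> innil b (0, x2) -> innil b (x1, x2).
Proof.
move=> hA hB h.
have [S' [[hS' xS' cS' _] nS']] := hA h.
have [S'' [[hS'' xS'' cS'' _] nS'']] := hB h.
have [S gS] := gen_exists b h (x1, x2).
exists S; split => //.
pose T := (linfun p1 @: S' + linfun p2 @: S'')%VS.
have Tin : forall w, w \in T -> exists2 a, a \in S' & exists2 c, c \in S'' & w = (a.1, c.2).
  move=> w /memv_addP [w1 /memv_imgP [a aS ->] [w2 /memv_imgP [c cS ->] ->]].
  by exists a => //; exists c => //; rewrite !lfunE /= p12.
have inT : forall a c, a \in S' -> c \in S'' -> (a.1, c.2) \in T.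
  move=> a c aS cS; rewrite -p12; apply: memvD.
  - by apply: (subvP (addvSl _ _)); rewrite -(lfunE (p1 : {linear _ -> _})); apply: memv_img.
  - by apply: (subvP (addvSr _ _)); rewrite -(lfunE (p2 : {linear _ -> _})); apply: memv_img.
have cT : lie_closed b T.
  move=> w y /Tin [a aS [c cS ->]] /Tin [a' aS' [c' cSS' ->]].
  by have := inT (b a a') (b c c') (cS' _ _ aS aS') (cS'' _ _ cS cSS').
have hT : h \in T by have := inT h h hS' hS''; case: (h).
have xT : (x1, x2) \in T by apply: (inT (x1, 0) (0, x2) xS' xS'').
case: gS => hS xS cS minS.
have sST := minS T cT hT xT.
apply: (engel sumLie cS) => z u /(subvP sST) /Tin [a aS [c cS2 ->]] /(subvP sST) /Tin [a' aS' [c' cS2' ->]].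
have [n1 e1] := nilp_adnil sumLie nS' aS aS'.
have [n2 e2] := nilp_adnil sumLie nS'' cS2 cS2'.
exists (n1 + n2)%N; rewrite iter_sum /=.
move: e1 e2; rewrite !iter_sum => -[e1 _] [_ e2].
rewrite addnC (iter_more n2 (br0 H1 _) e1) addnC (iter_more n1 (br0 H2 _) e2). by [].
Qed.

Lemma SN1 z1 (c1 : V1) : (forall n, iter n (b1 z1) c1 <> 0) -> ~ innil b (c1, 0).
Proof.
move=> H hn; have [n] := gen_adnil sumLie (hn (z1, 0)).
by rewrite iter_sum => /(congr1 fst) /= E; exact: H n E.
Qed.
Lemma SN2 z2 (c2 : V2) : (forall n, iter n (b2 z2) c2 <> 0) -> ~ innil b (0, c2).
Proof.
move=> H hn; have [n] := gen_adnil sumLie (hn (0, z2)).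
by rewrite iter_sum => /(congr1 snd) /= E; exact: H n E.
Qed.

Lemma abelpair (a : V1) (c : V2) : b (a, 0) (0, c) = 0.
Proof. by rewrite /sum_bracket /= br0 // bl0. Qed.

Lemma pairD (a : V1) (c : V2) : ((a, 0) + (0, c) : V1 * V2) = (a, c).
Proof. by transitivity (a + 0, 0 + c); [by [] | rewrite addr0 add0r]. Qed.
Lemma pairB1 (a : V1) (c : V2) : ((a, c) - (a, 0) : V1 * V2) = (0, c).
Proof. by transitivity (a - a, c - 0); [by [] | rewrite subrr subr0]. Qed.
Lemma pairB2 (a : V1) (c : V2) : ((a, c) - (0, c) : V1 * V2) = (a, 0).
Proof. by transitivity (a - 0, c - c); [by [] | rewrite subrr subr0]. Qed.

Lemma inS2l (u v : V1 * V2) : u \in (<[u]> + <[v]>)%VS.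
Proof. by apply: (subvP (addvSl _ _)); apply: memv_line. Qed.
Lemma inS2r (u v : V1 * V2) : v \in (<[u]> + <[v]>)%VS.
Proof. by apply: (subvP (addvSr _ _)); apply: memv_line. Qed.
Lemma inS2D (u v : V1 * V2) : u + v \in (<[u]> + <[v]>)%VS.
Proof. by apply: memvD; [apply: inS2l | apply: inS2r]. Qed.

Local Notation R := (clos_refl_trans _ (nil_adj b)).

Lemma to_Q (c1 : V1) (c2 : V2) : ~ innil b (c1, 0) -> ~ innil b (0, c2) ->
  forall x, ~ innil b x -> R x (0, c2) /\ R (0, c2) x.
Proof.
move=> nP nQ [x1 x2] nx.
have PQ := adj_abel sumLie nP nQ (abelpair c1 c2) (inS2l _ _) (inS2r _ _) (fun U _ hp hq => conj hp hq).
have xin : ((x1, x2) : V1 * V2) \in (<[(x1, 0%R)]> + <[(0%R, x2)]>)%VS.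
  by rewrite -pairD; apply: inS2D.
case: (classic (innil b (x1, 0))) => hx1.
  have hx2 : ~ innil b (0, x2) by move=> hx2; apply: nx; apply: in_nil_sum.
  have hU : forall U : {vspace V1 * V2}, lie_closed b U -> (x1, x2) \in U -> (0, x2) \in U ->
      (x1, 0) \in U /\ (0, x2) \in U.
    by move=> U _ hp hq; split => //; rewrite -(pairB2 x1 x2); exact: memvB.
  have [A1 A2] := adj_abel sumLie nx hx2 (abelpair x1 x2) xin (inS2r _ _) hU.
  have [B1 B2] := adj_abel sumLie hx2 nP (abelpair c1 x2) (inS2r _ _) (inS2l _ _) (fun U _ hp hq => conj hq hp).
  case: PQ => [C1 C2]; split.
  - by apply: rt_trans A1 _; apply: rt_trans B1 C1.
  - by apply: rt_trans C2 _; apply: rt_trans B2 A2.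
have hU : forall U : {vspace V1 * V2}, lie_closed b U -> (x1, x2) \in U -> (x1, 0) \in U ->
    (x1, 0) \in U /\ (0, x2) \in U.
  by move=> U _ hp hq; split => //; rewrite -(pairB1 x1 x2); exact: memvB.
have [A1 A2] := adj_abel sumLie nx hx1 (abelpair x1 x2) xin (inS2l _ _) hU.
have [B1 B2] := adj_abel sumLie hx1 nQ (abelpair x1 c2) (inS2l _ _) (inS2r _ _) (fun U _ hp hq => conj hp hq).
split; [exact: rt_trans A1 B1 | exact: rt_trans B2 A2].
Qed.
End Sum.

Lemma nonnil_ex (F : fieldType) (V : vectType F) (b : V -> V -> V) :
  is_lie_bracket b -> ~ lie_nilpotent b fullv ->
  exists z c, forall n, iter n (b z) c <> 0.
Proof.
move=> Hb nn; apply: NNPP => Hn; apply: nn; apply: (engel Hb).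
  by move=> x y _ _; apply: memvf.
move=> z u _ _; apply: NNPP => Hz; apply: Hn; exists z, u => n E; apply: Hz; by exists n.
Qed.

Theorem proposition5p3 (F : fieldType) (V1 V2 : vectType F)
  (b1 : V1 -> V1 -> V1) (b2 : V2 -> V2 -> V2) :
  is_lie_bracket b1 -> is_lie_bracket b2 ->
  ~ lie_nilpotent b1 fullv -> ~ lie_nilpotent b2 fullv ->
  nilgraph_connected (sum_bracket b1 b2).
Proof.
move=> H1 H2 n1 n2.
have [z1 [c1 hc1]] := nonnil_ex H1 n1.
have [z2 [c2 hc2]] := nonnil_ex H2 n2.
have nP := SN1 H1 H2 hc1; have nQ := SN2 H1 H2 hc2.
move=> x y nx ny.
have [A _] := to_Q H1 H2 nP nQ nx.
have [_ B] := to_Q H1 H2 nP nQ ny.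
exact: rt_trans A B.
Qed.
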